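(* Let $f:M\to N$ be a map between MT-algebras satisfying (P1), (P2) and (P4). The following are equivalent: (1) $f$ satisfies (P3), i.e. $f$ is a proximity morphism; (2) for all $a_1,a_2,b_1,b_2\in M$, if $a_1\prec b_1$ and $a_2\prec b_2$ then $f(a_1\vee a_2)\prec f(b_1)\vee f(b_2)$; (3) for all $a,b\in M$, if $a\prec b$ then $\neg f(\neg a)\prec f(b)$. Here $\prec$ on $M$ is the cons-below relation of $M$ and $\prec$ on $N$ is that of $N$.
   Context: An MT-algebra is a pair $(M,\square)$ where $M$ is a complete boolean algebra and $\square:M\to M$ satisfies $\square 1=1$, $\square(a\wedge b)=\square a\wedge\square b$, $\square a\le a$, $\square a\le\square\square a$. Write $\Diamond a=\neg\square\neg a$. An element $a$ is open if $\square a=a$, closed if $\Diamond a=a$, and locally closed if $a=\square b\wedge\Diamond c$ for some $b,c\in M$; $\mathcal O M$, $\mathcal{LC} M$ denote the sets of open and locally closed elements; $\mathcal O M$ is a frame. $\mathrm{cons}\,M$ is the set of finite joins of elements of $\mathcal{LC}M$. The cons-below relation: $a\prec b$ iff there is $c\in\mathrm{cons}\,M$ with $a\le c\le b$. Conditions on a map $f:M\to N$: (P1) $f$ maps $\mathcal O M$ into $\mathcal O N$ and $f|_{\mathcal O M}:\mathcal O M\to\mathcal O N$ is a frame morphism; (P2) $f(a\wedge b)=f(a)\wedge f(b)$ for all $a,b\in M$; (P3) $f(\bigvee S)=\bigvee\{f(s):s\in S\}$ for every finite $S\subseteq\mathcal{LC}M$; (P4) $f(a)=\bigvee\{f(x):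 x\in\mathcal{LC}M,\ x\le a\}$ for every $a\in M$. A proximity morphism is a map satisfying (P1)–(P4). *)

(* Defs.v *)
From mathcomp Require Import all_boot all_order.
Set Implicit Arguments. Unset Strict Implicit. Unset Printing Implicit Defensive.
Import Order.Theory.
Local Open Scope order_scope.

(* A boolean algebra is a complemented distributive lattice with top and
   bottom (ctbDistrLatticeType). Completeness is witnessed by an arbitrary
   join operator [sup] on predicates. *)
Record MTAlgebra (d : Order.disp_t) (T : ctbDistrLatticeType d) := {
  sup : (T -> Prop) -> T;
  sup_ub : forall (S : T -> Prop) x, S x -> x <= sup S;
  sup_least : forall (S : T -> Prop) y, (forall x, S x -> x <= y) -> sup S <= y;
  box : T -> T;
  box1 : box \top = \top;
  boxI : forall a b, box (a `&` b) = box a `&` box b;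
  box_le : forall a, box a <= a;
  box_box : forall a, box a <= box (box a)
}.

Section MTDefs.
Context {d : Order.disp_t} {T : ctbDistrLatticeType d} (M : MTAlgebra T).

Definition dia (a : T) : T := ~` box M (~` a).
Definition is_open (a : T) : Prop := box M a = a.
Definition is_closed (a : T) : Prop := dia a = a.
Definition is_LC (a : T) : Prop := exists b c, a = box M b `&` dia c.
Definition is_cons (a : T) : Prop :=
  exists s : seq T, (forall x, x \in s -> is_LC x) /\ a = \join_(x <- s) x.
Definition cons_below (a b : T) : Prop :=
  exists c, is_cons c /\ a <= c /\ c <= b.
End MTDefs.

Section Props.
Context {d1 : Order.disp_t} {T1 : ctbDistrLatticeType d1} (M : MTAlgebra T1)
        {d2 : Order.disp_t} {T2 : ctbDistrLatticeType d2} (N : MTAlgebra T2).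

(* (P1): f maps opens to opens and restricts to a frame morphism O M -> O N
   (preserves top, binary meets and arbitrary joins of open elements). *)
Definition P1 (f : T1 -> T2) : Prop :=
  [/\ forall a, is_open M a -> is_open N (f a),
      f \top = \top,
      forall a b, is_open M a -> is_open M b -> f (a `&` b) = f a `&` f b &
      forall S : T1 -> Prop, (forall x, S x -> is_open M x) ->
        f (sup M S) = sup N (fun y => exists2 x, S x & y = f x)].

Definition P2 (f : T1 -> T2) : Prop := forall a b, f (a `&` b) = f a `&` f b.

Definition P3 (f : T1 -> T2) : Prop :=
  forall s : seq T1, (forall x, x \in s -> is_LC M x) ->
    f (\join_(x <- s) x) = \join_(x <- s) f x.

Definition P4 (f : T1 -> T2) : Prop :=
  forall a, f a = sup N (fun y => exists2 x, is_LC M x /\ x <= a & y = f x).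
End Props.

(* Main.v *)
Require Import Defs.
From mathcomp Require Import all_boot all_order.
Import Order.Theory.
Set Implicit Arguments. Unset Strict Implicit.
Local Open Scope order_scope.

Section Gen.
Context {d : Order.disp_t} {T : ctbDistrLatticeType d} (M : MTAlgebra T).

Lemma box_mono a b : a <= b -> box M a <= box M b.
Proof.
move=> /meet_idPl ab; rewrite -ab boxI; exact: leIr.
Qed.

Lemma box_idem a : box M (box M a) = box M a.
Proof. by apply/le_anti; rewrite box_le box_box. Qed.

Lemma box0 : box M \bot = \bot.
Proof. by apply/le_anti; rewrite box_le le0x. Qed.

Lemma dia_top : dia M \top = \top.
Proof. by rewrite /dia compl1 box0 compl0. Qed.

Lemma LC_cons x : is_LC M x -> is_cons M x.
Proof.
move=> hx; exists [:: x]; split; first by move=> y; rewrite inE => /eqP ->.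
by rewrite big_cons big_nil joinx0.
Qed.

Lemma LC_compl x : is_LC M x ->
  exists y z, [/\ is_LC M y, is_LC M z & ~` x = y `|` z].
Proof.
move=> [b [c ->]]; exists (dia M (~` b)), (box M (~` c)); split.
- by exists (\top : T); exists (~` b); rewrite box1 meet1x.
- by exists (~` c); exists (\top : T); rewrite dia_top meetx1.
- by rewrite complI /dia !complK.
Qed.

Lemma compl_uniq (x y : T) : x `&` y = \bot -> x `|` y = \top -> y = ~` x.
Proof.
move=> h1 h2; apply/le_anti/andP; split.
  by rewrite -disj_leC meetC h1.
have : ~` x = ~` x `&` (x `|` y) by rewrite h2 meetx1.
by rewrite meetUr meetCx join0x => ->; exact: leIr.
Qed.
End Gen.

Section F.
Context {d1 : Order.disp_t} {T1 : ctbDistrLatticeType d1} (M : MTAlgebra T1)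
        {d2 : Order.disp_t} {T2 : ctbDistrLatticeType d2} (N : MTAlgebra T2)
        (f : T1 -> T2) (H1 : P1 M N f) (H2 : P2 f).

Lemma fmono a b : a <= b -> f a <= f b.
Proof. by move=> /meet_idPl ab; rewrite -ab H2; exact: leIr. Qed.

Lemma ftop : f \top = \top.
Proof. by case: H1. Qed.

Lemma f0 : f \bot = \bot.
Proof.
case: H1 => _ _ _ hs.
have e : sup M (fun _ => False) = \bot.
  by apply/le_anti; rewrite le0x andbT; apply: sup_least.
have := hs (fun _ => False) (fun _ (h : False) => match h with end).
rewrite e => ->; apply/le_anti; rewrite le0x andbT.
by apply: sup_least => y [].
Qed.

Lemma fcompl_of a : f a `|` f (~` a) = \top -> f (~` a) = ~` f a.
Proof.
move=> h; apply: compl_uniq => //.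
by rewrite -H2 meetxC f0.
Qed.

Hypothesis H3 : P3 M f.

Lemma fLC_compl x : is_LC M x -> f (~` x) = ~` f x.
Proof.
move=> hx; apply: fcompl_of.
have [y [z [hy hz e]]] := LC_compl hx.
have h := H3 (s := [:: x; y; z]).
rewrite !big_cons !big_nil !joinx0 -e joinxC ftop in h.
have {}h := h _.
apply/le_anti; rewrite lex1 /= h; last first.
  by move=> w; rewrite !inE => /orP[/eqP->|/orP[/eqP->|/eqP->]].
apply: leU2 => //; rewrite e leUx; apply/andP; split; apply: fmono.
  exact: leUl.
exact: leUr.
Qed.

Lemma fcons_compl (s : seq T1) : (forall x, x \in s -> is_LC M x) ->
  f (~` \join_(x <- s) x) = ~` f (\join_(x <- s) x).
Proof.
move=> hs; rewrite H3 //; elim: s hs => [|x s IH] hs.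
  by rewrite !big_nil compl0 ftop compl0.
rewrite !big_cons !complU H2 IH; last by move=> y ys; apply: hs; rewrite inE ys orbT.
by rewrite fLC_compl //; apply: hs; exact: mem_head.
Qed.

Lemma fLC_LC x : is_LC M x -> is_LC N (f x).
Proof.
move=> [b [c ->]]; rewrite H2.
have ob : is_open M (box M b) by rewrite /is_open box_idem.
have oc : is_open M (box M (~` c)) by rewrite /is_open box_idem.
case: H1 => hop _ _ _.
exists (f (box M b)), (~` f (box M (~` c))).
rewrite /dia complK (hop _ ob) (hop _ oc) /dia -fLC_compl //.
by exists (~` c); exists (\top : T1); rewrite dia_top meetx1.
Qed.

Lemma fcons_cons c : is_cons M c -> is_cons N (f c).
Proof.
move=> [s [hs ->]]; exists (map f s); split.
  by move=> y /mapP [x xs ->]; apply: fLC_LC; apply: hs.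
by rewrite H3 // big_map.
Qed.
End F.

Theorem lemma3p10 (d1 : Order.disp_t) (T1 : ctbDistrLatticeType d1) (M : MTAlgebra T1)
  (d2 : Order.disp_t) (T2 : ctbDistrLatticeType d2) (N : MTAlgebra T2)
  (f : T1 -> T2) :
  P1 M N f -> P2 f -> P4 M N f ->
  (P3 M f <->
     (forall a1 a2 b1 b2, cons_below M a1 b1 -> cons_below M a2 b2 ->
        cons_below N (f (a1 `|` a2)) (f b1 `|` f b2))) /\
  (P3 M f <->
     (forall a b, cons_below M a b -> cons_below N (~` f (~` a)) (f b))).
Proof.
move=> H1 H2 _.
have fm := fmono H2.
have conseq : forall (g : seq T1 -> Prop), (forall x s, (forall y, y \in x :: s -> is_LC M y) ->
     f (x `|` \join_(y <- s) y) <= f x `|` f (\join_(y <- s) y)) -> P3 M f.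
  move=> _ step s; elim: s => [|x s IH] hs; first by rewrite !big_nil (f0 H1).
  rewrite !big_cons -IH; last by move=> y ys; apply: hs; rewrite inE ys orbT.
  apply/le_anti; rewrite step // leUx !fm ?leUl ?leUr //.
split; split.
- move=> H3 a1 a2 b1 b2 [c1 [hc1 [l1 r1]]] [c2 [hc2 [l2 r2]]].
  exists (f (c1 `|` c2)); split.
    apply: (fcons_cons H1 H2 H3); case: hc1 => [s1 [hs1 ->]]; case: hc2 => [s2 [hs2 ->]].
    exists (s1 ++ s2); split; last by rewrite big_cat.
    by move=> x; rewrite mem_cat => /orP[/hs1|/hs2].
  split; first by apply: fm; exact: leU2.
  case: hc1 => [s1 [hs1 e1]]; case: hc2 => [s2 [hs2 e2]].
  have -> : c1 `|` c2 = \join_(x <- s1 ++ s2) x by rewrite big_cat -e1 -e2.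
  rewrite H3; last by move=> x; rewrite mem_cat => /orP[/hs1|/hs2].
  rewrite big_cat /= -!H3 // -e1 -e2; apply: leU2; exact: fm.
- move=> h; apply: (conseq (fun _ => True)) => x s hs.
  have [c [_ [l r]]] : cons_below N (f (x `|` \join_(y <- s) y)) (f x `|` f (\join_(y <- s) y)).
    apply: h.
      exists x; split; last by split.
      by apply: LC_cons; apply: hs; exact: mem_head.
    exists (\join_(y <- s) y); split; last by split.
    exists s; split => //.
    by move=> y ys; apply: hs; rewrite inE ys orbT.
  exact: le_trans l r.
- move=> H3 a b [c [[s [hs e]] [l r]]].
  exists (f c); split; first by apply: (fcons_cons H1 H2 H3); exists s.
  split; last exact: fm.
  have -> : f c = ~` f (~` c) by rewrite e (fcons_compl H1 H2 H3 hs) complK.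
  by rewrite leC; apply: fm; rewrite leC.
- move=> h; apply: (conseq (fun _ => True)) => x s hs.
  set J := \join_(y <- s) y.
  have hx : is_LC M x by apply: hs; exact: mem_head.
  have [c [_ [l r]]] := h x x (ex_intro _ x (conj (LC_cons hx) (conj (lexx x) (lexx x)))).
  have top : f x `|` f (~` x) = \top.
    have lr := le_trans l r.
    apply/le_anti; rewrite lex1 /= -(joinxC (f (~` x))) joinC.
    exact: leU2 lr (lexx _).
  have -> : f (x `|` J) = f (x `|` J) `&` (f x `|` f (~` x)) by rewrite top meetx1.
  rewrite (@meetUr _ T2) -!H2; apply: leU2; apply: fm; first exact: leIr.
  by rewrite (@meetUl _ T1) meetxC join0x; exact: leIl.
Qed.
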